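(* In the setting below, let $B_t = \{i \in [n] : \tilde{x}_i\tilde{w}_t \leq -\frac{1}{2}\gamma\hat{w}_t\}$. If $\eta \geq \eta_0$, then for every integer $0\le t < \tau$, $$\left(1 - \frac{16}{\eta^3}\right)G(w_t) \leq \frac{1}{n}\sum_{i \in B_t}\frac{1}{\exp(a_t^i)+1} \leq G(w_t).$$
   Context: Dimension $d=2$. Data $x_1,\dots,x_n\in\mathbb{R}^2$ with $\|x_i\|\le 1$, linearly separable (some $w$ has $\langle w,x_i\rangle>0$ for all $i$). $F(w) = \frac{1}{n}\sum_{i=1}^n \log(1+\exp(-\langle w, x_i\rangle))$ and $G(w) = \frac{1}{n}\sum_{i=1}^n \frac{1}{\exp(\langle w, x_i\rangle)+1}$. Maximum margin $\gamma = \max_{\|w\|=1}\min_i \langle w, x_i\rangle$ with maximizer the unit vector $w_*$; $v_*$ is a fixed unit vector orthogonal to $w_*$. Gradient descent: $w_0=0$, $w_{t+1} = w_t - \eta\nabla F(w_t)$ with constant $\eta>0$. $\hat{w}_t = \langle w_t, w_*\rangle$, $\tilde{w}_t = \langle w_t, v_*\rangle$, $\tilde{x}_i = \langle x_i, v_*\rangle$, $a_t^i = \langle w_t, x_i\rangle$. $\tau = \min\{t\ge 0: F(w_t)\le 1/(8\eta)\}$. $\eta_0 = \max(n, \frac{32}{\gamma^2}\log\frac{256}{\gamma^2})$. *)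

(* Defs.v *)
(* concrete reals R; vectors of R^2 are pairs (R * R).
   Data points are x 0, ..., x (n-1) (paper's x_1, ..., x_n). *)
From Stdlib Require Import Reals List.
Import ListNotations.
Open Scope R_scope.

Definition vec2 := (R * R)%type.

Definition dot (u v : vec2) : R := fst u * fst v + snd u * snd v.
Definition vnorm (u : vec2) : R := sqrt (dot u u).
Definition vadd (u v : vec2) : vec2 := (fst u + fst v, snd u + snd v).
Definition vscale (c : R) (u : vec2) : vec2 := (c * fst u, c * snd u).
Definition vzero : vec2 := (0, 0).

Definition rsum (n : nat) (f : nat -> R) : R :=
  fold_right Rplus 0 (map f (seq 0 n)).

Definition vsum (n : nat) (f : nat -> vec2) : vec2 :=
  fold_right vadd vzero (map f (seq 0 n)).

Definition Frisk (n : nat) (x : nat -> vec2) (w : vec2) : R :=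
  / INR n * rsum n (fun i => ln (1 + exp (- dot w (x i)))).

Definition Grisk (n : nat) (x : nat -> vec2) (w : vec2) : R :=
  / INR n * rsum n (fun i => / (exp (dot w (x i)) + 1)).

(* Gradient of F, written out:  since d/dz log(1+exp(-z)) = -1/(exp z + 1),
   grad F(w) = -(1/n) sum_i x_i / (exp(<w,x_i>) + 1). *)
Definition gradF (n : nat) (x : nat -> vec2) (w : vec2) : vec2 :=
  vscale (- / INR n) (vsum n (fun i => vscale (/ (exp (dot w (x i)) + 1)) (x i))).

Fixpoint gd (n : nat) (x : nat -> vec2) (eta : R) (t : nat) : vec2 :=
  match t with
  | O => vzero
  | S t' => let w := gd n x eta t' in vadd w (vscale (- eta) (gradF n x w))
  end.

Definition eta0 (n : nat) (gamma : R) : R :=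
  Rmax (INR n) (32 / gamma ^ 2 * ln (256 / gamma ^ 2)).

(* Main.v *)
Require Import Defs.
From Stdlib Require Import Reals List Lra Psatz Classical.
Open Scope R_scope.

Lemma fold_plus_acc l a : fold_right Rplus a l = fold_right Rplus 0 l + a.
Proof. induction l; simpl; [lra|rewrite IHl; lra]. Qed.

Lemma rsum_S n f : rsum (S n) f = rsum n f + f n.
Proof.
  unfold rsum. rewrite seq_S, map_app, fold_right_app. simpl.
  rewrite fold_plus_acc. lra.
Qed.

Lemma rsum_0 f : rsum 0 f = 0.
Proof. reflexivity. Qed.

Lemma vsum_S n f : vsum (S n) f = vadd (vsum n f) (f n).
Proof.
  unfold vsum. rewrite seq_S, map_app, fold_right_app. simpl.
  generalize (map f (seq 0 n)). intro l. induction l; simpl.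
  - unfold vadd, vzero; simpl. destruct (f n); simpl; f_equal; ring.
  - rewrite IHl. unfold vadd; simpl; f_equal; ring.
Qed.

Lemma dot_vsum n f v : dot (vsum n f) v = rsum n (fun i => dot (f i) v).
Proof.
  induction n.
  - unfold dot, vsum, vzero, rsum; simpl; ring.
  - rewrite vsum_S, rsum_S, <- IHn. unfold dot, vadd; simpl; ring.
Qed.

Lemma rsum_le n f g : (forall i, (i < n)%nat -> f i <= g i) -> rsum n f <= rsum n g.
Proof.
  induction n; intro H.
  - rewrite !rsum_0; lra.
  - rewrite !rsum_S. assert (f n <= g n) by (apply H; lia).
    assert (rsum n f <= rsum n g) by (apply IHn; intros; apply H; lia). lra.
Qed.

Lemma rsum_plus n f g : rsum n (fun i => f i + g i) = rsum n f + rsum n g.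
Proof. induction n; [rewrite !rsum_0; lra|rewrite !rsum_S, IHn; lra]. Qed.

Lemma rsum_const n c : rsum n (fun _ => c) = INR n * c.
Proof. induction n; [rewrite rsum_0; simpl; lra|rewrite rsum_S, IHn, S_INR; lra]. Qed.

Lemma rsum_scal n c f : rsum n (fun i => c * f i) = c * rsum n f.
Proof. induction n; [rewrite !rsum_0; lra|rewrite !rsum_S, IHn; lra]. Qed.

Lemma rsum_ge_term n f i0 : (forall i, (i < n)%nat -> 0 <= f i) -> (i0 < n)%nat ->
  f i0 <= rsum n f.
Proof.
  induction n; intros H Hi; [lia|]. rewrite rsum_S.
  destruct (Nat.eq_dec i0 n).
  - subst. assert (0 <= rsum n f).
    { replace 0 with (INR n * 0) by ring. rewrite <- rsum_const.
      apply rsum_le. intros; apply H; lia. }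
    lra.
  - assert (f i0 <= rsum n f) by (apply IHn; [intros; apply H; lia|lia]).
    assert (0 <= f n) by (apply H; lia). lra.
Qed.

Lemma rsum_nonneg n f : (forall i, (i < n)%nat -> 0 <= f i) -> 0 <= rsum n f.
Proof.
  induction n; intro H; [rewrite rsum_0; lra|]. rewrite rsum_S.
  assert (0 <= f n) by (apply H; lia).
  assert (0 <= rsum n f) by (apply IHn; intros; apply H; lia). lra.
Qed.

Lemma ln_le_sub1 y : 0 < y -> ln y <= y - 1.
Proof. intro. pose proof (exp_ineq1_le (ln y)). rewrite exp_ln in H0; lra. Qed.

Lemma ln_le' a b : 0 < a -> a <= b -> ln a <= ln b.
Proof. intros. destruct (Req_dec a b); [subst; lra|]. left; apply ln_increasing; lra. Qed.

Lemma exp_le' a b : a <= b -> exp a <= exp b.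
Proof. intros. destruct (Req_dec a b); [subst; lra|]. left; apply exp_increasing; lra. Qed.

Lemma dot_self_nonneg u : 0 <= dot u u.
Proof. unfold dot; nra. Qed.

Lemma vnorm1 u : vnorm u = 1 -> dot u u = 1.
Proof. unfold vnorm; intro H. rewrite <- (sqrt_sqrt (dot u u)) by apply dot_self_nonneg.
  rewrite H; ring. Qed.

Lemma vnorm_le1 u : vnorm u <= 1 -> dot u u <= 1.
Proof. unfold vnorm; intro H. rewrite <- (sqrt_sqrt (dot u u)) by apply dot_self_nonneg.
  pose proof (sqrt_pos (dot u u)). nra. Qed.

Lemma parseval a b c d : a*a+b*b = 1 -> c*c+d*d = 1 -> c*a+d*b = 0 ->
  forall u1 u2 v1 v2 : R,
  u1*v1+u2*v2 = (u1*a+u2*b)*(v1*a+v2*b) + (u1*c+u2*d)*(v1*c+v2*d).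
Proof.
  intros H1 H2 H3 u1 u2 v1 v2.
  assert (Hca : c*a = -(d*b)) by lra.
  assert (E1 : c*c = b*b).
  { transitivity (c*c*(a*a+b*b)); [rewrite H1; ring|].
    transitivity ((c*a)*(c*a) + b*b*c*c); [ring|]. rewrite Hca.
    transitivity (b*b*(c*c+d*d)); [ring|]. rewrite H2; ring. }
  assert (E2 : d*d = a*a).
  { transitivity (d*d*(a*a+b*b)); [rewrite H1; ring|].
    transitivity ((d*b)*(d*b) + a*a*d*d); [ring|].
    replace (d*b) with (-(c*a)) by lra.
    transitivity (a*a*(c*c+d*d)); [ring|]. rewrite H2; ring. }
  assert (E3 : a*(a*b+c*d) = 0).
  { transitivity (b*(a*a) + d*(c*a)); [ring|]. rewrite Hca, <- E2; ring. }
  assert (E4 : b*(a*b+c*d) = 0).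
  { transitivity (a*(b*b) + c*(d*b)); [ring|].
    replace (d*b) with (-(c*a)) by lra. rewrite <- E1; ring. }
  assert (E5 : a*b+c*d = 0).
  { transitivity ((a*a+b*b)*(a*b+c*d)); [rewrite H1; ring|].
    transitivity (a*(a*(a*b+c*d)) + b*(b*(a*b+c*d))); [ring|]. rewrite E3, E4; ring. }
  assert (E6 : a*a+c*c-1 = 0) by lra.
  assert (E7 : b*b+d*d-1 = 0) by lra.
  transitivity (u1*v1 + u2*v2 + u1*v1*(a*a+c*c-1) + u2*v2*(b*b+d*d-1) + (u1*v2+u2*v1)*(a*b+c*d)).
  - rewrite E5, E6, E7; ring.
  - ring.
Qed.

Lemma rsum_ext n f g : (forall i, f i = g i) -> rsum n f = rsum n g.
Proof. intro H. unfold rsum. f_equal. apply map_ext. exact H. Qed.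

Lemma dot_vadd u v z : dot (vadd u v) z = dot u z + dot v z.
Proof. unfold dot, vadd; simpl; ring. Qed.
Lemma dot_vscale c u z : dot (vscale c u) z = c * dot u z.
Proof. unfold dot, vscale; simpl; ring. Qed.
Lemma dot_comm u v : dot u v = dot v u.
Proof. unfold dot; ring. Qed.

Lemma what_rec n x eta z s :
  dot (gd n x eta (S s)) z = dot (gd n x eta s) z +
    eta * / INR n * rsum n (fun i => / (exp (dot (gd n x eta s) (x i)) + 1) * dot (x i) z).
Proof.
  change (gd n x eta (S s)) with
    (vadd (gd n x eta s) (vscale (- eta) (gradF n x (gd n x eta s)))).
  unfold gradF. rewrite dot_vadd, !dot_vscale, dot_vsum.
  rewrite (rsum_ext _ _ (fun i => / (exp (dot (gd n x eta s) (x i)) + 1) * dot (x i) z))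
    by (intro; apply dot_vscale).
  ring.
Qed.

Theorem lemma14
  (n : nat) (x : nat -> vec2) (gamma eta : R) (wstar vstar : vec2)
  (* n >= 1 data points, all of norm at most 1 *)
  (Hn : (0 < n)%nat)
  (Hx : forall i, (i < n)%nat -> vnorm (x i) <= 1)
  (* linear separability *)
  (Hsep : exists w : vec2, forall i, (i < n)%nat -> 0 < dot w (x i))
  (* gamma = max_{||w||=1} min_i <w, x_i>, attained at the unit vector wstar *)
  (Hwstar_unit : vnorm wstar = 1)
  (Hgamma_le : forall i, (i < n)%nat -> gamma <= dot wstar (x i))
  (Hgamma_att : exists i, (i < n)%nat /\ dot wstar (x i) = gamma)
  (Hgamma_max : forall w : vec2, vnorm w = 1 ->
                  exists i, (i < n)%nat /\ dot w (x i) <= gamma)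
  (* vstar a unit vector orthogonal to wstar *)
  (Hvstar_unit : vnorm vstar = 1)
  (Hvstar_orth : dot vstar wstar = 0)
  (* step size *)
  (Heta : eta0 n gamma <= eta)
  (t : nat)
  (* t < tau, i.e. F(w_s) > 1/(8 eta) for all s <= t *)
  (Htau : forall s, (s <= t)%nat -> Frisk n x (gd n x eta s) > / (8 * eta)) :
  let w := gd n x eta t in
  let what := dot w wstar in
  let wtil := dot w vstar in
  let SB := / INR n * rsum n (fun i =>
              if Rle_dec (dot (x i) vstar * wtil) (- (1/2) * gamma * what)
              then / (exp (dot w (x i)) + 1) else 0) in
  (1 - 16 / eta ^ 3) * Grisk n x w <= SB /\ SB <= Grisk n x w.
Proof.
  assert (Hws : dot wstar wstar = 1) by (apply vnorm1; auto).
  assert (Hvs : dot vstar vstar = 1) by (apply vnorm1; auto).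
  assert (PV : forall u v, dot u v = dot u wstar * dot v wstar + dot u vstar * dot v vstar).
  { destruct wstar as [a b], vstar as [c d]. unfold dot in *; simpl in *.
    intros [u1 u2] [v1 v2]; simpl. apply parseval; auto. }
  assert (Hnpos : 0 < INR n) by (apply lt_0_INR; lia).
  assert (Hn1 : 1 <= INR n) by (apply (le_INR 1); lia).
  assert (Heta_n : INR n <= eta) by (eapply Rle_trans; [apply Rmax_l|exact Heta]).
  assert (Hetapos : 0 < eta) by lra.
  assert (Hgpos : 0 < gamma).
  { destruct Hsep as [w0 Hw0].
    assert (Hd : 0 < dot w0 w0).
    { destruct (Rle_lt_or_eq_dec 0 (dot w0 w0) (dot_self_nonneg w0)) as [h|h]; auto.
      exfalso. destruct w0 as [p q]. unfold dot in h; simpl in h.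
      assert (p = 0) by nra. assert (q = 0) by nra. subst.
      specialize (Hw0 0%nat Hn). unfold dot in Hw0; simpl in Hw0. lra. }
    set (r := sqrt (dot w0 w0)).
    assert (Hr : 0 < r) by (apply sqrt_lt_R0; auto).
    assert (Hrr : r * r = dot w0 w0) by (apply sqrt_sqrt; lra).
    destruct (Hgamma_max (vscale (/ r) w0)) as [i [Hi Hle]].
    { unfold vnorm. rewrite dot_vscale, dot_comm, dot_vscale.
      replace (/ r * (/ r * dot w0 w0)) with 1 by (rewrite <- Hrr; field; lra).
      apply sqrt_1. }
    rewrite dot_vscale in Hle. specialize (Hw0 i Hi).
    assert (0 < / r) by (apply Rinv_0_lt_compat; auto). nra. }
  assert (Hg1 : gamma <= 1).
  { destruct Hgamma_att as [i [Hi Heq]]. rewrite <- Heq.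
    pose proof (vnorm_le1 _ (Hx i Hi)) as Hxx. clear -Hws Hxx. revert Hws Hxx.
    generalize wstar (x i). intros [a b] [p q]. unfold dot; simpl. intros.
    assert (0 <= (a-p)*(a-p) + (b-q)*(b-q)) by (apply Rplus_le_le_0_compat; apply Rle_0_sqr).
    assert ((a-p)*(a-p) + (b-q)*(b-q) = (a*a+b*b) + (p*p+q*q) - 2*(a*p+b*q)) by ring.
    lra. }
  set (c := gamma ^ 2).
  assert (Hc : 0 < c) by (unfold c; nra).
  assert (Hc1 : c <= 1) by (unfold c; nra).
  assert (HL : 32 / c * ln (256 / c) <= eta) by (eapply Rle_trans; [apply Rmax_r|exact Heta]).
  assert (Key : 16 * ln eta <= eta * c).
  { assert (E : ln eta = ln (eta * c / 32) + ln (32 / c)).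
    { rewrite <- ln_mult. replace (eta * c / 32 * (32 / c)) with eta by (field; lra). reflexivity.
      apply Rmult_lt_0_compat; [nra|lra]. apply Rmult_lt_0_compat; [lra|]. apply Rinv_0_lt_compat; lra. }
    assert (E1 : ln (eta * c / 32) <= eta * c / 32 - 1)
      by (apply ln_le_sub1; apply Rmult_lt_0_compat; [nra|lra]).
    assert (E2 : ln (32 / c) <= ln (256 / c)).
    { apply ln_le'. apply Rmult_lt_0_compat; [lra|apply Rinv_0_lt_compat; lra].
      unfold Rdiv. apply Rmult_le_compat_r; [left; apply Rinv_0_lt_compat; lra|lra]. }
    assert (E3 : ln (256 / c) <= eta * c / 32).
    { replace (ln (256 / c)) with (c / 32 * (32 / c * ln (256 / c))) by (field; lra).
      replace (eta * c / 32) with (c / 32 * eta) by field.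
      apply Rmult_le_compat_l; [lra|exact HL]. }
    lra. }
  assert (Hinc : forall s, dot (gd n x eta s) wstar <= dot (gd n x eta (S s)) wstar).
  { intro s. rewrite what_rec.
    assert (0 <= rsum n (fun i => / (exp (dot (gd n x eta s) (x i)) + 1) * dot (x i) wstar)).
    { replace 0 with (INR n * 0) by ring. rewrite <- rsum_const. apply rsum_le.
      intros i Hi. apply Rmult_le_pos.
      - left; apply Rinv_0_lt_compat. pose proof (exp_pos (dot (gd n x eta s) (x i))). lra.
      - rewrite dot_comm. specialize (Hgamma_le i Hi). lra. }
    assert (0 <= eta * / INR n) by (apply Rmult_le_pos; [lra|left; apply Rinv_0_lt_compat; lra]).
    nra. }
  assert (Hbig : forall s, eta * gamma / 2 <= dot (gd n x eta (S s)) wstar).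
  { induction s.
    - rewrite what_rec. change (gd n x eta 0) with vzero.
      assert (Z : forall v, dot vzero v = 0) by (intro; unfold dot, vzero; simpl; ring).
      rewrite Z.
      assert (INR n * (gamma / 2) <= rsum n (fun i => / (exp (dot vzero (x i)) + 1) * dot (x i) wstar)).
      { rewrite <- rsum_const. apply rsum_le. intros i Hi. rewrite Z, exp_0.
        rewrite dot_comm. specialize (Hgamma_le i Hi). lra. }
      assert (0 <= eta * / INR n) by (apply Rmult_le_pos; [lra|left; apply Rinv_0_lt_compat; lra]).
      apply Rle_trans with (0 + eta * / INR n * (INR n * (gamma / 2))).
      + right. field. lra.
      + apply Rplus_le_compat_l. apply Rmult_le_compat_l; auto.
    - eapply Rle_trans; [exact IHs|apply Hinc]. }
  assert (Hnonneg : forall s, 0 <= dot (gd n x eta s) wstar).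
  { intro s. destruct s.
    - unfold dot; simpl; lra.
    - specialize (Hbig s). nra. }
  intros w what wtil SB.
  assert (Ginv : forall i, 0 < / (exp (dot w (x i)) + 1)).
  { intro i. apply Rinv_0_lt_compat. pose proof (exp_pos (dot w (x i))). lra. }
  assert (Gnn : 0 <= Grisk n x w).
  { unfold Grisk. apply Rmult_le_pos; [left; apply Rinv_0_lt_compat; lra|].
    replace 0 with (INR n * 0) by ring. rewrite <- rsum_const. apply rsum_le.
    intros; left; apply Ginv. }
  set (D := / INR n * rsum n (fun i =>
              if Rle_dec (dot (x i) vstar * wtil) (- (1/2) * gamma * what)
              then 0 else / (exp (dot w (x i)) + 1))).
  assert (HGD : Grisk n x w = SB + D).
  { unfold Grisk, SB, D. rewrite <- Rmult_plus_distr_l, <- rsum_plus. f_equal.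
    apply rsum_ext. intro i. destruct Rle_dec; ring. }
  assert (HD0 : 0 <= D).
  { unfold D. apply Rmult_le_pos; [left; apply Rinv_0_lt_compat; lra|].
    apply rsum_nonneg.
    intros; destruct Rle_dec; [lra|left; apply Ginv]. }
  assert (HDE' : forall E, (forall i, (i < n)%nat -> (if Rle_dec (dot (x i) vstar * wtil) (- (1/2) * gamma * what)
              then 0 else / (exp (dot w (x i)) + 1)) <= E) -> D <= E).
  { intros E HE. unfold D. replace E with (/ INR n * (INR n * E)) by (field; lra).
    apply Rmult_le_compat_l; [left; apply Rinv_0_lt_compat; lra|].
    rewrite <- rsum_const. apply rsum_le. exact HE. }
  clearbody SB D.
  split; [|lra].
  destruct t as [|s].
  { assert (D <= 0).
    { apply HDE'. intros i _.
      destruct Rle_dec as [_|h]; [lra|]. exfalso. apply h.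
      unfold wtil, what, w. simpl. unfold dot, vzero; simpl. lra. }
    assert (0 <= 16 / eta ^ 3).
    { unfold Rdiv. apply Rmult_le_pos; [lra|]. left; apply Rinv_0_lt_compat.
      apply pow_lt; lra. }
    nra. }
  assert (Hwhat : eta * gamma / 2 <= what) by apply Hbig.
  set (E := exp (- (gamma * what / 2))).
  assert (HE : 0 < E) by apply exp_pos.
  assert (HDE : D <= E).
  { apply HDE'. intros i Hi.
    destruct Rle_dec as [_|h]; [lra|].
    assert (Ha : gamma * what / 2 <= dot w (x i)).
    { rewrite (PV w (x i)). fold what wtil.
      specialize (Hgamma_le i Hi). rewrite dot_comm in Hgamma_le.
      assert (0 <= what) by apply Hnonneg. nra. }
    pose proof (exp_pos (dot w (x i))).
    apply Rle_trans with (/ exp (dot w (x i))).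
    - apply Rinv_le_contravar; lra.
    - rewrite <- exp_Ropp. apply exp_le'. lra. }
  assert (HE4 : E <= / eta ^ 4).
  { unfold E. replace (/ eta ^ 4) with (exp (- ln (eta ^ 4))).
    - apply exp_le'. rewrite ln_pow by lra.
      replace (INR 4) with 4 by (simpl; ring). unfold c in Key.
      assert (gamma * (eta * gamma / 2) <= gamma * what) by (apply Rmult_le_compat_l; lra).
      nra.
    - rewrite exp_Ropp, exp_ln; auto. apply pow_lt; lra. }
  assert (HG : / (16 * eta) < Grisk n x w).
  { pose proof (Htau (S s) (le_n _)) as HF. fold w in HF.
    destruct (classic (exists i, (i < n)%nat /\ dot w (x i) < 0)) as [[i0 [Hi0 Hneg]]|Hall].
    - assert (Hg0 : / 2 < / (exp (dot w (x i0)) + 1)).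
      { apply Rinv_lt_contravar.
        + pose proof (exp_pos (dot w (x i0))). nra.
        + assert (exp (dot w (x i0)) < 1) by (rewrite <- exp_0; apply exp_increasing; lra). lra. }
      assert (Hs : / (exp (dot w (x i0)) + 1) <= rsum n (fun i => / (exp (dot w (x i)) + 1))).
      { apply (rsum_ge_term n (fun i => / (exp (dot w (x i)) + 1))); auto.
        intros; left; apply Ginv. }
      unfold Grisk.
      assert (/ eta <= / INR n) by (apply Rinv_le_contravar; lra).
      assert (0 < / eta) by (apply Rinv_0_lt_compat; lra).
      assert (/ (16 * eta) = / 16 * / eta) by (field; lra).
      assert (0 < / INR n) by (apply Rinv_0_lt_compat; lra).
      nra.
    - assert (Hall' : forall i, (i < n)%nat -> 0 <= dot w (x i)).
      { intros i Hi. apply Rnot_lt_le. intro h. apply Hall. eauto. }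
      assert (Frisk n x w <= 2 * Grisk n x w).
      { unfold Frisk, Grisk.
        replace (2 * (/ INR n * rsum n (fun i => / (exp (dot w (x i)) + 1))))
          with (/ INR n * rsum n (fun i => 2 * / (exp (dot w (x i)) + 1)))
          by (rewrite rsum_scal; ring).
        apply Rmult_le_compat_l; [left; apply Rinv_0_lt_compat; lra|].
        apply rsum_le. intros i Hi.
        specialize (Hall' i Hi).
        set (e := exp (dot w (x i))).
        assert (He : 1 <= e) by (unfold e; rewrite <- exp_0; apply exp_le'; lra).
        eapply Rle_trans; [apply ln_le_sub1; pose proof (exp_pos (- dot w (x i))); lra|].
        rewrite exp_Ropp. fold e.
        assert (/ e = (e + 1) / e * / (e + 1)) by (field; lra).
        assert ((e + 1) / e <= 2).
        { assert (/ e <= 1) by (rewrite <- Rinv_1; apply Rinv_le_contravar; lra).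
          replace ((e + 1) / e) with (1 + / e) by (field; lra). lra. }
        assert (0 < / (e + 1)) by (apply Rinv_0_lt_compat; lra).
        nra. }
      assert (/ (16 * eta) = / (8 * eta) / 2) by (field; lra).
      lra. }
  assert (HK : / eta ^ 4 = 16 / eta ^ 3 * / (16 * eta)) by (field; lra).
  assert (0 < 16 / eta ^ 3).
  { unfold Rdiv. apply Rmult_lt_0_compat; [lra|]. apply Rinv_0_lt_compat. apply pow_lt; lra. }
  assert (16 / eta ^ 3 * / (16 * eta) < 16 / eta ^ 3 * Grisk n x w)
    by (apply Rmult_lt_compat_l; auto).
  nra.
Qed.
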